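(* Let $\mathcal{M}$ be a nontrivial, unbounded graph matroid family with dimensionality $d$, threshold $t$ and rank function $r$. Let $r_0=r(K_t)-d\cdot t$, let $\varepsilon=\frac{1}{6d}$, and let $\delta$ be a positive integer with $\delta\ge\max(6r_0,t)$ such that every graph with minimum degree at least $\delta$ has a $d$-dominating set of size at most $\varepsilon|V(G)|$. If $G=(V,E)$ is a graph with minimum degree at least $\delta$, then there is a vertex $v_0\in V$ such that $r(G)\le r(G-v_0)+d$.
   Context: All graphs are finite and simple and have no isolated vertices. A graph matroid family $\mathcal{M}$ assigns to every graph $G$ a matroid $\mathcal{M}(G)$ on $E(G)$ such that (i) every graph isomorphism $V(G)\to V(H)$ induces an isomorphism $\mathcal{M}(G)\to\mathcal{M}(H)$, and (ii) for every subgraph $H$ of $G$, $\mathcal{M}(H)$ is the restriction of $\mathcal{M}(G)$ to $E(H)$. $r(G)$ is the rank of $\mathcal{M}(G)$. $\mathcal{M}$ is nontrivial if some graph $G$ has $r(G)<|E(G)|$, unbounded if $r(K_n)$ is unbounded. An $\mathcal{M}$-circuit is a graph $C$ with $r(C)<|E(C)|$ and $r(C-e)=|E(C)|-1$ for all edges $e$. Dimensionality $d$: minimum over $\mathcal{M}$-circuits of (minimum degree $-1$); threshold $t$: minimum of $|V(C)|-1$ over $\mathcal{M}$-circuits $C$ of minimum degree $d+1$. A set $U\subseteq V(G)$ is $d$-dominating in $G$ if every vertex of $V(G)\setminus U$ has at least $d$ neighbours in $U$. *)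

(* Defs.v *)
From HB Require Import structures.
From mathcomp Require Import all_boot all_order all_algebra.
From mathcomp Require Import finmap.
Set Implicit Arguments. Unset Strict Implicit. Unset Printing Implicit Defensive.
Import Order.TTheory GRing.Theory Num.Theory.
Local Open Scope fset_scope.

(* An edge {u,v} (u <> v) is stored in normal
   form as the pair (min u v, max u v).  A (simple, finite) graph without
   isolated vertices is a finite set of such normalized pairs; its vertex
   set is the set of endpoints of its edges. *)
Definition edge := (nat * nat)%type.
Definition graph := {fset edge}.

Definition mk_edge (u v : nat) : edge := (minn u v, maxn u v).

Definition is_graph (G : graph) : bool := [forall p : G, (val p).1 < (val p).2].

Definition verts (G : graph) : {fset nat} :=
  [fset p.1 | p in G] `|` [fset p.2 | p in G].

Definition incident (v : nat) (p : edge) : bool := (p.1 == v) || (p.2 == v).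

Definition deg (G : graph) (v : nat) : nat := #|` [fset p in G | incident v p]|.

Definition is_mindeg (G : graph) (k : nat) : Prop :=
  (exists2 v, v \in verts G & deg G v = k) /\
  (forall v, v \in verts G -> k <= deg G v).

Definition mindeg_ge (G : graph) (k : nat) : Prop :=
  forall v, v \in verts G -> k <= deg G v.

Definition del_vertex (G : graph) (v : nat) : graph :=
  [fset p in G | ~~ incident v p].

Definition map_graph (f : nat -> nat) (G : graph) : graph :=
  [fset mk_edge (f p.1) (f p.2) | p in G].

Definition Kn (n : nat) : graph :=
  [fset p : edge in [seq ((i, j) : edge) | i <- iota 0 n, j <- iota 0 n] | p.1 < p.2].

Definition nbrs (G : graph) (v : nat) : {fset nat} :=
  [fset u in verts G | mk_edge u v \in G].

Definition dominating (G : graph) (d : nat) (U : {fset nat}) : Prop :=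
  U `<=` verts G /\
  forall v, v \in verts G -> v \notin U -> d <= #|` (nbrs G v `&` U)|.

Definition is_matroid (E : {fset edge}) (ind : {fset edge} -> bool) : Prop :=
  [/\ ind fset0,
      (forall A, ind A -> A `<=` E),
      (forall A B, ind B -> A `<=` B -> ind A) &
      (forall A B, ind A -> ind B -> #|` A| < #|` B| ->
         exists2 e, e \in B `\` A & ind (e |` A))].

(* A graph matroid family: M G is the independence predicate of the matroid
   M(G) on E(G). *)
Definition graph_matroid_family (M : graph -> {fset edge} -> bool) : Prop :=
  [/\ (forall G, is_graph G -> is_matroid G (M G)),
      (* (i) isomorphism invariance: every graph isomorphism V(G) -> V(H)
         is the restriction of a map f injective on V(G) with H = f(G) *)
      (forall G (f : nat -> nat), is_graph G -> {in verts G &, injective f} ->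
         forall F, F `<=` G -> M (map_graph f G) (map_graph f F) = M G F) &
      (forall G H, is_graph G -> H `<=` G ->
         forall F, M H F = M G F && (F `<=` H))].

Definition rank (M : graph -> {fset edge} -> bool) (G : graph) : nat :=
  \max_(F <- fpowerset G | M G F) #|` F|.

Definition nontrivial (M : graph -> {fset edge} -> bool) : Prop :=
  exists2 G, is_graph G & rank M G < #|` G|.

Definition unbounded (M : graph -> {fset edge} -> bool) : Prop :=
  forall b, exists n, b < rank M (Kn n).

Definition is_circuit (M : graph -> {fset edge} -> bool) (C : graph) : Prop :=
  [/\ is_graph C, rank M C < #|` C| &
      forall e, e \in C -> rank M (C `\ e) = (#|` C| - 1)%N].

Definition is_dimensionality (M : graph -> {fset edge} -> bool) (d : nat) : Prop :=
  (exists2 C, is_circuit M C & is_mindeg C d.+1) /\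
  (forall C k, is_circuit M C -> is_mindeg C k -> d.+1 <= k).

Definition is_threshold (M : graph -> {fset edge} -> bool) (d t : nat) : Prop :=
  (exists2 C, is_circuit M C /\ is_mindeg C d.+1 & #|` verts C| = t.+1) /\
  (forall C, is_circuit M C -> is_mindeg C d.+1 -> t.+1 <= #|` verts C|).

(* Main.v *)
Require Import Defs.
From HB Require Import structures.
From mathcomp Require Import all_boot all_order all_algebra.
From mathcomp Require Import finmap zify.
Import Order.TTheory GRing.Theory Num.Theory.
Local Open Scope fset_scope.
Set Implicit Arguments. Unset Strict Implicit.

Definition rkI (ind : {fset edge} -> bool) (X : {fset edge}) := \max_(F <- fpowerset X | ind F) #|` F|.

Ltac revert_arith := repeat match goal with
 | H : is_true (leq _ _) |- _ => revert H
 | H : @eq nat _ _ |- _ => revert H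
 | H : is_true (negb (@eq_op _ _ _)) |- _ => revert H
 end.
Ltac gen_atoms := repeat match goal with
 | |- context [@bigop.body ?R ?I ?idx ?r ?F] => let a := fresh "g" in move: (@bigop.body R I idx r F) => a
 | |- context [rkI ?i ?X] => let a := fresh "g" in move: (rkI i X) => a
 | |- context [rank ?i ?X] => let a := fresh "g" in move: (rank i X) => a
 | |- context [deg ?G ?v] => let a := fresh "g" in move: (deg G v) => a
 | |- context [size ?s] => let a := fresh "g" in move: (size s) => a
 | |- context [index ?x ?s] => let a := fresh "g" in move: (index x s) => a
 | |- context [@fst ?A ?B ?p] => let a := fresh "g" in move: (@fst A B p) => a
 | |- context [@snd ?A ?B ?p] => let a := fresh "g" in move: (@snd A B p) => a
 end.
Ltac clear_all := repeat match goal with H : _ |- _ => clear H end.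
Ltac glia := revert_arith; gen_atoms; clear_all; lia.

Section Mat.
Variable (E : {fset edge}) (ind : {fset edge} -> bool).
Hypothesis hM : is_matroid E ind.


Lemma rkI_ge A X : ind A -> A `<=` X -> #|` A| <= rkI ind X.
Proof. by move=> iA AX; apply: leq_bigmax_seq; rewrite ?fpowersetE. Qed.

Lemma max_attained (r : seq {fset edge}) :
  \max_(F <- r | ind F) #|` F| = 0 \/
  exists2 F, F \in r & ind F /\ #|` F| = \max_(F <- r | ind F) #|` F|.
Proof.
elim: r => [|a r IH]; first by left; rewrite big_nil.
rewrite big_cons; case: ifP => ia.
  case: IH => [->|[F Fr [iF <-]]].
    by right; exists a; rewrite ?mem_head ?maxn0.
  case: (leqP #|` a| #|` F|) => h.
    by right; exists F; [rewrite in_cons Fr orbT| split=> //; rewrite (maxn_idPr h)].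
  by right; exists a; [rewrite mem_head| split=> //; rewrite (maxn_idPl (ltnW h))].
case: IH => [->|[F Fr [iF <-]]]; first by left.
by right; exists F; [rewrite in_cons Fr orbT|].
Qed.

Lemma rkI_basis X : exists B, [/\ ind B, B `<=` X & #|` B| = rkI ind X].
Proof.
case: hM => i0 _ _ _.
case: (max_attained (fpowerset X)) => [h|[F FX [iF h]]].
  by exists fset0; rewrite /rkI h cardfs0 fsub0set.
by exists F; split => //; rewrite -fpowersetE.
Qed.

Lemma rkI_le X : forall A, ind A -> A `<=` X -> #|` A| <= rkI ind X.
Proof. move=> A; exact: rkI_ge. Qed.

Lemma rkI_extend A X : ind A -> A `<=` X ->
  exists B, [/\ ind B, A `<=` B, B `<=` X & #|` B| = rkI ind X].
Proof.
case: hM => _ _ hh ex.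
move=> iA AX; move Hk: (rkI ind X - #|` A|) => k.
elim: k A iA AX Hk => [|k IH] A iA AX Hk.
  exists A; split => //; apply/eqP; rewrite eqn_leq rkI_ge //=; move: Hk; move: (rkI ind X) (#|` A|) => r a; glia.
have [B0 [iB0 B0X cB0]] := rkI_basis X.
have lt : #|` A| < #|` B0| by move: Hk cB0; move: (rkI ind X) => r; glia.
have [e eB iE] := ex _ _ iA iB0 lt.
move: eB; rewrite inE => /andP[eA eB0].
have eAX : e |` A `<=` X by rewrite fsubUset fsub1set (fsubsetP B0X) // AX.
have := IH (e |` A) iE eAX; rewrite cardfsU1 eA /=.
case=> [|B [iB sB BX cB]]; first by move: Hk; move: (rkI ind X) (#|` A|) => r a; glia.
by exists B; split => //; apply: fsubset_trans sB; apply: fsubsetU1.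
Qed.

Lemma rkI_mono X Y : X `<=` Y -> rkI ind X <= rkI ind Y.
Proof.
move=> XY; have [B [iB BX <-]] := rkI_basis X.
by apply: rkI_ge => //; apply: fsubset_trans XY.
Qed.

Lemma rkI_union X D : rkI ind (X `|` D) <= rkI ind X + #|` D|.
Proof.
case: hM => _ _ hh _.
have [B [iB BX <-]] := rkI_basis (X `|` D).
have h1 : #|` B `&` X| <= rkI ind X.
  by apply: rkI_ge; [apply: hh iB _; apply: fsubsetIl | apply: fsubsetIr].
have h2 : #|` B `\` X| <= #|` D|.
  apply: fsubset_leq_card; apply/fsubsetP => x; rewrite inE => /andP[xX xB].
  by move: (fsubsetP BX x xB); rewrite inE (negbTE xX).
have := cardfsID X B; glia.
Qed.

Lemma rkI_closure Y Z e B0 : ~~ ind Z -> ind (Z `\ e) -> Z `<=` e |` Y ->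
  ind B0 -> B0 `<=` Y -> #|` B0| = rkI ind Y -> e \notin B0 -> ~~ ind (e |` B0).
Proof.
case: hM => _ _ hh ex.
move=> nZ iZe ZY iB0 B0Y cB0 eB0; apply/negP => ieB.
have ZeY : Z `\ e `<=` Y.
  apply/fsubsetP => x; rewrite in_fsetD1 => /andP[xe xZ].
  by move: (fsubsetP ZY x xZ); rewrite in_fset1U (negbTE xe).
have [B' [iB' sB' B'Y cB']] := rkI_extend iZe ZeY.
have ZB' : Z `<=` e |` B'.
  apply/fsubsetP => x xZ; rewrite in_fset1U; case: (x =P e) => //= /eqP xe.
  by apply: (fsubsetP sB'); rewrite in_fsetD1 xe.
have lt : #|` B'| < #|` e |` B0|.
  rewrite cardfsU1 eB0 cB' -cB0; move: (#|` B0|) => b /=; glia.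
have [g gB ig] := ex _ _ iB' ieB lt.
move: gB; rewrite in_fsetD in_fset1U => /andP[gB' /orP[/eqP ge|gB0]].
  by apply: (negP nZ); apply: hh ZB'; rewrite -ge.
have : #|` g |` B'| <= rkI ind Y.
  by apply: rkI_ge => //; rewrite fsubUset fsub1set (fsubsetP B0Y) // B'Y.
rewrite cardfsU1 gB' cB'; move: (rkI ind Y) => r /=; glia.
Qed.
End Mat.

Lemma is_graphP G : reflect (forall p, p \in G -> p.1 < p.2) (is_graph G).
Proof.
apply: (iffP forallP) => [h p pG | h p]; first exact: (h [` pG]).
exact: h (fsvalP p).
Qed.

Lemma is_graph_sub G H : is_graph G -> H `<=` G -> is_graph H.
Proof. move=> /is_graphP g /fsubsetP HG; apply/is_graphP => p /HG; exact: g. Qed.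

Lemma in_verts G v : reflect (exists2 p, p \in G & incident v p) (v \in verts G).
Proof.
rewrite /verts in_fsetU; apply: (iffP orP).
- case=> /imfsetP [p /= pG ->]; exists p => //; rewrite /incident eqxx ?orbT //.
- case=> p pG /orP [/eqP <-|/eqP <-]; [left|right]; apply/imfsetP; exists p => //.
Qed.

Lemma verts1 G p : p \in G -> p.1 \in verts G.
Proof. by move=> pG; apply/in_verts; exists p; rewrite // /incident eqxx. Qed.
Lemma verts2 G p : p \in G -> p.2 \in verts G.
Proof. by move=> pG; apply/in_verts; exists p; rewrite // /incident eqxx orbT. Qed.

Lemma mk_edge_inj1 x x' w : mk_edge x w = mk_edge x' w -> x = x'.
Proof. rewrite /mk_edge; case=> h1 h2; glia. Qed.

Lemma mk_edgeC x y : mk_edge x y = mk_edge y x.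
Proof. by rewrite /mk_edge minnC maxnC. Qed.

Lemma in_Kn n p : (p \in Kn n) = (p.1 < p.2) && (p.2 < n).
Proof.
case: p => a b; rewrite /Kn !inE /=.
apply/andP/andP => [[/allpairsP [[i j] [/= hi hj [-> ->]]] ij]|[ab bn]].
  by move: hi hj; rewrite !mem_iota => /andP[_ hi] /andP[_ hj]; split.
split => //; apply/allpairsP; exists (a, b); rewrite /= !mem_iota; split => //; glia.
Qed.

Lemma is_graph_Kn n : is_graph (Kn n).
Proof. by apply/is_graphP => p; rewrite in_Kn => /andP[]. Qed.

Lemma Kn_sub m n : m <= n -> Kn m `<=` Kn n.
Proof. move=> mn; apply/fsubsetP => p; rewrite !in_Kn => /andP[h1 h2]; rewrite h1 /=; glia. Qed.


Definition other (c : nat) (p : edge) := if p.1 == c then p.2 else p.1.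
Definition incs (G : graph) c := [fset p in G | incident c p].
Definition Dset d m : {fset edge} := [fset x in [seq mk_edge i m | i <- iota 0 d]].

Lemma mk_edge_lt a b : a < b -> mk_edge a b = (a, b).
Proof. by move=> ab; rewrite /mk_edge (minn_idPl (ltnW ab)) (maxn_idPr (ltnW ab)). Qed.

Lemma edge_other G c p : is_graph G -> p \in G -> incident c p -> p = mk_edge (other c p) c.
Proof.
move=> /is_graphP gG pG; have := gG _ pG; case: p {pG} => a b /= ab.
rewrite /incident /other /=; case: (a =P c) => [<- _|_ /= /eqP <-].
  by rewrite mk_edgeC mk_edge_lt.
by rewrite mk_edge_lt.
Qed.

Lemma other_neq G c p : is_graph G -> p \in G -> incident c p -> other c p != c.
Proof.
move=> /is_graphP gG pG; have := gG _ pG; case: p {pG} => a b /= ab.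
rewrite /incident /other /=; case: (a =P c) => [<- _|_ /= /eqP <-]; apply/eqP; glia.
Qed.

Lemma other_verts G c p : p \in G -> other c p \in verts G.
Proof. by move=> pG; rewrite /other; case: ifP => _; [apply: verts2|apply: verts1]. Qed.

Lemma mk_edge_minmax (f : nat -> nat) a b : mk_edge (f (minn a b)) (f (maxn a b)) = mk_edge (f a) (f b).
Proof.
case: (leqP a b) => ab //.
by rewrite mk_edgeC.
Qed.


Lemma deg_verts G v : 0 < deg G v -> v \in verts G.
Proof.
rewrite /deg cardfs_gt0 => /fset0Pn [p]; rewrite inE => /andP[pC pc].
by apply/in_verts; exists p.
Qed.

Lemma deg_lt G v : is_graph G -> 0 < deg G v -> deg G v < #|` verts G|.
Proof.
move=> gG d0; have vV := deg_verts d0.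
have inj : {in incs G v &, injective (other v)}.
  move=> p q; rewrite !inE => /andP[pG pv] /andP[qG qv] e.
  by rewrite (edge_other gG pG pv) (edge_other gG qG qv) e.
have sub : other v @` incs G v `<=` verts G `\ v.
  apply/fsubsetP => x /imfsetP [p /=]; rewrite inE => /andP[pG pv] ->.
  by rewrite in_fsetD1 (other_neq gG pG pv) (other_verts _ pG).
have := fsubset_leq_card sub; move/card_in_imfsetP: inj => /eqP ->.
rewrite [#|` verts G|](cardfsD1 v) vV.
change (#|` incs G v| <= #|` verts G `\ v| -> #|` incs G v| < true + #|` verts G `\ v|).
move: (#|` incs G v|) (#|` verts G `\ v|) => a b /=; glia.
Qed.

Lemma card_sep (X : {fset edge}) (P : pred edge) : #|` [fset p in X | P p]| = \sum_(p <- X) P p.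
Proof.
rewrite card_fset_sum1 -big_fset_condE big_mkcond /=; apply: eq_bigr => p _.
by case: (P p).
Qed.

Lemma sum_eq_mem (s : seq nat) a : uniq s -> \sum_(w <- s) (a == w) = (a \in s).
Proof.
move=> us; rewrite -(count_uniq_mem a us).
by elim: s {us} => [|x s IH]; rewrite ?big_nil ?big_cons //= IH eq_sym.
Qed.

Lemma cnt_le (W : {fset nat}) (p : edge) : \sum_(w <- W) incident w p <= (p.1 \in W) + (p.2 \in W).
Proof.
rewrite -!sum_eq_mem ?fset_uniq // -big_split /=; apply: leq_sum => w _.
by rewrite /incident; case: (p.1 == w); case: (p.2 == w).
Qed.

Lemma sum_const_fset (W : {fset nat}) k : \sum_(w <- W) k = #|` W| * k.
Proof. by rewrite card_fset_sum1 big_distrl /=; apply: eq_bigr => *; rewrite mul1n. Qed.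

Lemma double_count (W : {fset nat}) (X : {fset edge}) :
  \sum_(w <- W) #|` [fset p in X | incident w p]| = \sum_(p <- X) \sum_(w <- W) incident w p.
Proof.
under eq_bigr => w _ do rewrite card_sep.
exact: exchange_big.
Qed.

Lemma mindeg_exists G w : w \in verts G -> exists k, is_mindeg G k /\ k <= deg G w.
Proof.
move=> wV.
have ex : exists k, [exists v : verts G, deg G (val v) == k].
  by exists (deg G w); apply/existsP; exists [` wV].
case: (ex_minnP ex) => k /existsP [v /eqP dv] kmin.
exists k; split; last by apply: kmin; apply/existsP; exists [` wV].
split; first by exists (val v) => //; apply: fsvalP.
by move=> u uV; apply: kmin; apply/existsP; exists [` uV].
Qed.

Section Fam.
Variable M : graph -> {fset edge} -> bool.
Hypothesis hF : graph_matroid_family M.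

Lemma hmat G : is_graph G -> is_matroid G (M G).
Proof. by move=> gG; case: hF => h _ _; apply: h. Qed.

Lemma hres G H F : is_graph G -> H `<=` G -> M H F = M G F && (F `<=` H).
Proof. by move=> gG HG; case: hF => _ _ h; apply: (h _ _ gG HG). Qed.

Lemma hiso G f F : is_graph G -> {in verts G &, injective f} -> F `<=` G ->
  M (map_graph f G) (map_graph f F) = M G F.
Proof. by move=> gG fi FG; case: hF => _ h _; apply: (h _ _ gG fi). Qed.

Lemma rank_sub G H : is_graph G -> H `<=` G -> rank M H = rkI (M G) H.
Proof.
move=> gG HG; rewrite /rank /rkI big_seq_cond [RHS]big_seq_cond.
apply: eq_bigl => F; rewrite fpowersetE; case: (boolP (F `<=` H)) => //= FH.
by rewrite (hres _ gG HG) FH andbT.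
Qed.

Lemma indG G H X : is_graph G -> H `<=` G -> M H X -> M G X.
Proof. by move=> gG HG; rewrite (hres _ gG HG) => /andP[]. Qed.

Lemma indH G H X : is_graph G -> H `<=` G -> X `<=` H -> M G X -> M H X.
Proof. by move=> gG HG XH; rewrite (hres _ gG HG) XH andbT. Qed.

Lemma rank_ge G X : M G X -> X `<=` G -> #|` X| <= rank M G.
Proof. by move=> iX XG; apply: rkI_ge. Qed.

Lemma rank_le_card G : rank M G <= #|` G|.
Proof.
apply/bigmax_leqP_seq => F; rewrite fpowersetE => FG _; exact: fsubset_leq_card.
Qed.

Lemma rank_full G : is_graph G -> rank M G = #|` G| -> M G G.
Proof.
move=> gG h; have [B [iB BG cB]] := rkI_basis (hmat gG) G.
have : B == G by rewrite -(fsubset_leqif_cards BG).2; apply/eqP; rewrite cB.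
by move/eqP => e; rewrite -[X in M G X]e.
Qed.

Lemma rank_dep G : rank M G < #|` G| -> ~~ M G G.
Proof. by move=> h; apply/negP => iG; have := rank_ge iG (fsubset_refl G); glia. Qed.


Lemma map_sub f A B : A `<=` B -> map_graph f A `<=` map_graph f B.
Proof.
move=> /fsubsetP AB; apply/fsubsetP => q /imfsetP [p /= pA ->].
by apply/imfsetP; exists p => //; apply: AB.
Qed.

Lemma map_card G f B : is_graph G -> {in verts G &, injective f} -> B `<=` G ->
  #|` map_graph f B| = #|` B|.
Proof.
move=> gG' fi /fsubsetP BG; have /is_graphP gG := gG'.
apply/eqP/card_in_imfsetP => p q pB qB /=.
move: (BG _ pB) (BG _ qB) => pG qG.
have p12 := gG _ pG; have q12 := gG _ qG.
have fp : f p.1 != f p.2.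
  apply/eqP => /fi h; move: (h (verts1 pG) (verts2 pG)); glia.
rewrite /mk_edge; case => h1 h2.
have [[e1 e2]|[e1 e2]] : (f p.1 = f q.1 /\ f p.2 = f q.2) \/ (f p.1 = f q.2 /\ f p.2 = f q.1).
  by move: fp h1 h2 => /eqP; glia.
  move: (fi _ _ (verts1 pG) (verts1 qG) e1) (fi _ _ (verts2 pG) (verts2 qG) e2).
  by case: p {pB pG p12 fp h1 h2 e1 e2} => a b; case: q {qB qG q12} => a' b' /= -> ->.
move: (fi _ _ (verts1 pG) (verts2 qG) e1) (fi _ _ (verts2 pG) (verts1 qG) e2).
glia.
Qed.

Lemma rank_le_Kn G : is_graph G -> rank M G <= rank M (Kn #|` verts G|).
Proof.
move=> gG; set s := enum_fset (verts G); pose f v := index v s.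
have fi : {in verts G &, injective f}.
  move=> x y xG yG e; rewrite -(nth_index 0 xG) -(nth_index 0 yG); exact: (congr1 (nth 0 s) e).
have sub : map_graph f G `<=` Kn #|` verts G|.
  apply/fsubsetP => q /imfsetP [p /= pG ->]; rewrite in_Kn /mk_edge /=.
  have h1 : f p.1 < #|` verts G| by rewrite /f index_mem; apply: verts1.
  have h2 : f p.2 < #|` verts G| by rewrite /f index_mem; apply: verts2.
  have ne : f p.1 != f p.2.
    apply/eqP => /fi h; move: (h (verts1 pG) (verts2 pG)) (is_graphP _ gG _ pG); glia.
  move: h1 h2 ne; move: (f p.1) (f p.2) (#|` verts G|) => a b n /eqP; glia.
have [B [iB BG cB]] := rkI_basis (hmat gG) G.
change (rkI (M G) G <= rank M (Kn #|` verts G|)); rewrite -cB -(map_card gG fi BG).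
apply: rank_ge; last by apply: fsubset_trans sub; apply: map_sub.
by apply: (indG (is_graph_Kn _) sub); rewrite hiso.
Qed.


Lemma circ_copy (C : graph) c d t m y :
  is_circuit M C -> deg C c = d.+1 -> #|` verts C| = t.+1 -> t <= m -> d <= y < m ->
  exists Z, [/\ Z `<=` mk_edge y m |` (Kn m `|` Dset d m),
     ~~ M (Kn m.+1) Z & M (Kn m.+1) (Z `\ mk_edge y m)].
Proof.
case=> gC rC cC degc cardC tm /andP[dy ym].
set s := [seq other c p | p <- enum_fset (incs C c)].
have ss : size s = d.+1 by rewrite size_map -degc.
have incsP p : (p \in incs C c) = (p \in C) && incident c p by rewrite !inE.
have s_uniq : uniq s.
  rewrite map_inj_in_uniq; first exact: fset_uniq.
  move=> p q; rewrite !incsP => /andP[pC pc] /andP[qC qc] e.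
  by rewrite (edge_other gC pC pc) (edge_other gC qC qc) e.
have sP x : x \in s -> exists2 p, p \in C & incident c p /\ x = other c p.
  by move=> /mapP [p]; rewrite incsP => /andP[pC pc] ->; exists p.
have cs : c \notin s.
  apply/negP => /sP [p pC [pc e]]; by move: (other_neq gC pC pc); rewrite -e eqxx.
have sV x : x \in s -> x \in verts C by move=> /sP [p pC [_ ->]]; apply: other_verts.
have sE x : x \in s -> mk_edge x c \in C.
  by move=> /sP [p pC [pc ->]]; rewrite -(edge_other gC pC pc).
have cV : c \in verts C.
  have : 0 < deg C c by rewrite degc.
  rewrite /deg cardfs_gt0 => /fset0Pn [p]; rewrite inE => /andP[pC pc].
  by apply/in_verts; exists p.
set o := enum_fset (verts C `\` (c |` [fset x in s])).
set L := c :: s ++ o.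
have L_uniq : uniq L.
  rewrite /L cons_uniq cat_uniq mem_cat negb_or cs s_uniq fset_uniq /= andbT.
  apply/andP; split.
    by apply/negP => /=; rewrite !inE eqxx.
  by apply/hasPn => x; rewrite !inE negb_or => /andP[/andP[_ h] _]; exact: h.
have LV : L =i verts C.
  move=> x; rewrite /L inE mem_cat; apply/idP/idP.
    by case/orP => [/eqP ->//|/orP[/sV//|]]; rewrite !inE => /andP[].
  move=> xV; case: (x =P c) => //= /eqP xc; case: (boolP (x \in s)) => //= xs.
  change (x \in verts C `\` (c |` [fset x in s])); rewrite in_fsetD xV andbT in_fset1U negb_or xc /=; rewrite inE; exact: xs.
have sizeL : size L = t.+1.
  by rewrite -cardC; apply: perm_size; apply: uniq_perm => //; apply: fset_uniq.
pose pos i := if i == 0 then m else i.-1.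
pose sw z := if z == d then y else if z == y then d else z.
pose f v := sw (pos (index v L)).
have swK z : sw (sw z) = z.
  rewrite /sw; case: (z =P d) => [->|zd]; first by rewrite eqxx; case: (y =P d).
  case: (z =P y) => [->|zy]; first by rewrite eqxx.
  by move: zd zy => /eqP/negbTE -> /eqP/negbTE ->.
have swI : injective sw by apply: (can_inj swK).
have swlt z : z < m -> sw z < m by rewrite /sw; case: ifP => _ //; case: ifP => _ //; glia.
have pos_inj i j : i <= t -> j <= t -> pos i = pos j -> i = j.
  rewrite /pos => hi hj; case: ifP => [/eqP->|/negbT i0]; case: ifP => [/eqP->|/negbT j0] //; glia.
have fi : {in verts C &, injective f}.
  move=> u v; rewrite -!LV => uL vL /swI e.
  have iu : index u L <= t by have := index_mem u L; rewrite uL sizeL.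
  have iv : index v L <= t by have := index_mem v L; rewrite vL sizeL.
  have e' := pos_inj _ _ iu iv e.
  by rewrite -(nth_index 0 uL) -(nth_index 0 vL) e'.
have fc : f c = m.
  have -> : f c = sw m by rewrite /f /L /= eqxx.
  rewrite /sw; case: ifP => [/eqP|_]; first glia.
  case: ifP => [/eqP|//]; glia.
have fs x : x \in s -> f x = sw (index x s).
  move=> xs; rewrite /f /L /=; case: (c =P x) => [e|_]; first by move: cs; rewrite e xs.
  by rewrite index_cat xs.
have flt v : v \in verts C -> v != c -> f v < m.
  rewrite -LV => vL vc; apply: swlt; rewrite /pos.
  have := index_mem v L; rewrite vL sizeL /L /= eq_sym (negbTE vc) /=; glia.
set x0 := nth 0 s d.
have x0s : x0 \in s by rewrite mem_nth // ss.
have fx0 : f x0 = y by rewrite fs // index_uniq ?ss // /sw eqxx.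
set e0 := mk_edge x0 c.
have e0C : e0 \in C by apply: sE.
set Z := map_graph f C.
have Ze0 : mk_edge (f e0.1) (f e0.2) = mk_edge y m by rewrite mk_edge_minmax fx0 fc.
have ZY : Z `<=` mk_edge y m |` (Kn m `|` Dset d m).
  apply/fsubsetP => q /imfsetP [p /= pC ->]; rewrite in_fset1U in_fsetU.
  case: (boolP (incident c p)) => pc.
    rewrite (edge_other gC pC pc) /= mk_edge_minmax fc.
    have xs : other c p \in s by apply/mapP; exists p; rewrite // incsP pC.
    rewrite fs //; have : index (other c p) s < d.+1 by rewrite -ss index_mem.
    move: (index (other c p) s) => j hi.
    case: (j =P d) => [->|/eqP nd]; first by rewrite /sw eqxx eqxx.
    have -> : sw j = j.
      by rewrite /sw (negbTE nd); case: ifP => // /eqP; glia.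
    apply/orP; right; apply/orP; right; rewrite /Dset inE; apply/mapP.
    by exists j => //; rewrite mem_iota; glia.
  move: pc; rewrite /incident negb_or => /andP[p1 p2].
  have h1 := flt _ (verts1 pC) p1; have h2 := flt _ (verts2 pC) p2.
  have ne : f p.1 != f p.2.
    apply/eqP => /fi h; move: (h (verts1 pC) (verts2 pC)) (is_graphP _ gC _ pC); glia.
  apply/orP; right; apply/orP; left; rewrite in_Kn /mk_edge /=.
  move: h1 h2 ne; move: (f p.1) (f p.2) => a b /eqP; glia.
have gK := is_graph_Kn m.+1.
have YK : mk_edge y m |` (Kn m `|` Dset d m) `<=` Kn m.+1.
  apply/fsubsetP => q; rewrite in_fset1U in_fsetU => /orP[/eqP ->|/orP[|]].
  - by rewrite mk_edge_lt // in_Kn /= ym ltnSn.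
  - by apply/fsubsetP/Kn_sub.
  - rewrite /Dset inE => /mapP [i]; rewrite mem_iota => /andP[_ hi] ->.
    rewrite mk_edge_lt ?in_Kn /=; glia.
have ZK : Z `<=` Kn m.+1 by apply: fsubset_trans YK.
exists Z; split => //.
  apply/negP => iZ; have iZZ : M Z Z := indH gK ZK (fsubset_refl Z) iZ.
  by move: iZZ; rewrite /Z hiso // ?fsubset_refl //; apply/negP; apply: rank_dep.
have ce0 := cC e0 e0C.
have gCe : is_graph (C `\ e0) := is_graph_sub gC (fsubsetDl _ _).
have i1 : M (C `\ e0) (C `\ e0).
  apply: rank_full => //; rewrite ce0 (cardfsD1 e0 C) e0C.
  by move: (#|` C `\ e0|) => k /=; glia.
have i2 : M C (C `\ e0) := indG gC (fsubsetDl _ _) i1.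
have i3 : M Z (map_graph f (C `\ e0)) by rewrite /Z hiso // fsubsetDl.
have i4 : M (Kn m.+1) (map_graph f (C `\ e0)) := indG gK ZK i3.
case: (hmat gK) => _ _ hh _; apply: (hh _ _ i4).
apply/fsubsetP => q; rewrite in_fsetD1 => /andP[qe /imfsetP [p /= pC qE]].
apply/imfsetP; exists p => //=; rewrite in_fsetD1 pC andbT.
by apply/eqP => pe; move: qe; rewrite qE pe Ze0 eqxx.
Qed.


Lemma Dset_sub d m : d <= m -> Kn m `|` Dset d m `<=` Kn m.+1.
Proof.
move=> dm; apply/fsubsetP => q; rewrite in_fsetU => /orP[|].
- by apply/fsubsetP/Kn_sub.
- rewrite /Dset inE => /mapP [i]; rewrite mem_iota => /andP[_ hi] ->.
  rewrite mk_edge_lt ?in_Kn /=; glia.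
Qed.

Lemma Kn_step C c d t m : is_circuit M C -> deg C c = d.+1 -> #|` verts C| = t.+1 ->
  t <= m -> d < m -> rank M (Kn m.+1) <= rank M (Kn m) + d.
Proof.
move=> circ degc cardC tm dm.
have gK := is_graph_Kn m.+1.
have YK := Dset_sub (ltnW dm).
have hmK := hmat gK.
have r1 : rkI (M (Kn m.+1)) (Kn m `|` Dset d m) <= rank M (Kn m) + d.
  rewrite (rank_sub gK (Kn_sub (leqnSn m))).
  apply: leq_trans (rkI_union hmK _ _) _; rewrite leq_add2l.
  rewrite /Dset card_fseq; apply: leq_trans (size_undup _) _.
  by rewrite size_map size_iota.
have [B0 [iB0 B0Y cB0]] := rkI_basis hmK (Kn m `|` Dset d m).
have [B [iB B0B BK cB]] := rkI_extend hmK iB0 (fsubset_trans B0Y YK).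
change (rkI (M (Kn m.+1)) (Kn m.+1) <= rank M (Kn m) + d); rewrite -cB.
case: (leqP #|` B| #|` B0|) => h.
  move: h cB0 r1; move: (rkI (M (Kn m.+1)) (Kn m `|` Dset d m)) => r; glia.
case: hmK => _ _ _ ex; have [e eB ie] := ex _ _ iB0 iB h.
move: eB; rewrite in_fsetD => /andP[eB0 eB].
have eK := fsubsetP BK e eB.
have eY : e \notin Kn m `|` Dset d m.
  apply/negP => eY.
  have sub : e |` B0 `<=` Kn m `|` Dset d m by rewrite fsubUset fsub1set eY B0Y.
  have := rkI_ge ie sub; rewrite cardfsU1 eB0 cB0.
  move: (rkI (M (Kn m.+1)) (Kn m `|` Dset d m)) => r /=; glia.
move: eK eY ie eB0 eB; case: e => a b; rewrite in_Kn /= in_fsetU in_Kn /= negb_or.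
move=> /andP[ab bm] /andP[nK nD] ie eB0 _.
have bm' : b = m by move: nK; rewrite ab /=; glia.
subst b.
have da : d <= a.
  rewrite leqNgt; apply/negP => ad; move/negP: nD; apply; rewrite /Dset inE.
  by apply/mapP; exists a; rewrite ?mem_iota ?mk_edge_lt.
have [Z [ZY nZ iZe]] := circ_copy circ degc cardC tm (introT andP (conj da ab)).
rewrite mk_edge_lt // in ZY iZe.
by have := rkI_closure (hmat gK) nZ iZe ZY iB0 B0Y cB0 eB0; rewrite ie.
Qed.

Lemma Kn_bound C c d t n : is_circuit M C -> deg C c = d.+1 -> #|` verts C| = t.+1 ->
  t <= n -> rank M (Kn n) <= rank M (Kn t) + d * (n - t).
Proof.
move=> circ degc cardC; elim: n => [|n IH] tn.
  have t0 : t = 0 by glia.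
  by rewrite t0 subnn muln0 addn0.
case: (ltnP t n.+1) => h; last first.
  have tn' : t = n.+1 by glia.
  by rewrite tn' subnn muln0 addn0.
have tn' : t <= n by glia.
have dn : d < n.
  have : deg C c < #|` verts C|.
    by apply: deg_lt; [case: circ | rewrite degc].
  rewrite degc cardC; glia.
have h2 := Kn_step circ degc cardC tn' dn.
have h1 := IH tn'.
have e : (d * (n.+1 - t) = d * (n - t) + d)%N.
  by rewrite subSn // mulnSr.
rewrite e; move: h1 h2; move: (rank M (Kn n)) (rank M (Kn n.+1)) (rank M (Kn t)) (d * (n - t)) => a b c' k.
glia.
Qed.

Lemma indep_lowdeg d G F : is_dimensionality M d -> is_graph G -> F `<=` G ->
  (forall p, p \in F -> exists2 w, incident w p & deg F w <= d) -> M G F.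
Proof.
move=> [_ dim] gG FG low; apply/negPn/negP => nF.
have ex : exists k, [exists Z : fpowerset F, ~~ M G (val Z) && (#|` val Z| == k)].
  have FF : F \in fpowerset F by rewrite fpowersetE.
  by exists #|` F|; apply/existsP; exists [` FF] => /=; rewrite nF eqxx.
case: (ex_minnP ex) => k /existsP [[Z ZF] /= /andP[nZ /eqP cZ]] kmin.
move: ZF; rewrite fpowersetE => ZF.
have ZG := fsubset_trans ZF FG.
have gZ := is_graph_sub gG ZG.
have minZ : forall Z', Z' `<=` F -> ~~ M G Z' -> k <= #|` Z'|.
  move=> Z' Z'F nZ'; apply: kmin; apply/existsP.
  have ZF' : Z' \in fpowerset F by rewrite fpowersetE.
  by exists [` ZF'] => /=; rewrite nZ' eqxx.
have circ : is_circuit M Z.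
  split => //.
    have [B [iB BZ cB]] := rkI_basis (hmat gZ) Z.
    change (rkI (M Z) Z < #|` Z|); rewrite -cB ltn_neqAle fsubset_leq_card // andbT.
    rewrite (fsubset_leqif_cards BZ).2; apply/negP => /eqP BZe.
    by move: nZ; rewrite -BZe (indG gG ZG iB).
  move=> e eZ.
  have cZe : #|` Z| = #|` Z `\ e|.+1 by rewrite (cardfsD1 e Z) eZ.
  have iZe : M G (Z `\ e).
    apply/negPn/negP => nZe; have := minZ _ (fsubset_trans (fsubsetDl _ _) ZF) nZe.
    by rewrite -cZ cZe; move: (#|` Z `\ e|) => a; glia.
  have iZe' : M (Z `\ e) (Z `\ e) := indH gG (fsubset_trans (fsubsetDl _ _) ZG) (fsubset_refl _) iZe.
  have h1 := rank_ge iZe' (fsubset_refl _).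
  have h2 := rank_le_card (Z `\ e).
  rewrite cZe; move: h1 h2; move: (rank M (Z `\ e)) (#|` Z `\ e|) => a b; glia.
have Z0 : Z != fset0.
  by apply/negP => /eqP Z0; move: nZ; rewrite Z0; case: (hmat gG) => ->.
case/fset0Pn: Z0 => p pZ.
have [w wp dw] := low p (fsubsetP ZF p pZ).
have wV : w \in verts Z by apply/in_verts; exists p.
have [k' [mk kle]] := mindeg_exists wV.
have := dim _ _ circ mk.
have : deg Z w <= deg F w.
  apply: fsubset_leq_card; apply/fsubsetP => q; rewrite !inE => /andP[qZ ->].
  by rewrite (fsubsetP ZF q qZ).
glia.
Qed.

End Fam.

Lemma inc_mk w x : incident w (mk_edge x w).
Proof. by rewrite /incident /mk_edge /=; case: (leqP x w) => h; rewrite eqxx ?orbT. Qed.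

Lemma inc_mk2 w x w' : incident w (mk_edge x w') -> w = x \/ w = w'.
Proof. rewrite /incident /mk_edge /= => /orP[/eqP|/eqP]; glia. Qed.

Lemma mk_ends x w : ((mk_edge x w).1 = x /\ (mk_edge x w).2 = w) \/ ((mk_edge x w).1 = w /\ (mk_edge x w).2 = x).
Proof. rewrite /mk_edge /=; glia. Qed.

Unset Implicit Arguments.
Theorem lemma3p20 (M : graph -> {fset edge} -> bool) (d t delta : nat) :
  graph_matroid_family M -> nontrivial M -> unbounded M ->
  is_dimensionality M d -> is_threshold M d t ->
  (0 < d)%N ->
  (0 < delta)%N -> (t <= delta)%N ->
  (* delta >= 6 r_0 with r_0 = r(K_t) - d t *)
  (6%:Z * ((rank M (Kn t))%:Z - (d * t)%:Z) <= delta%:Z)%R ->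
  (* every graph of min degree >= delta has a d-dominating set of size
     at most eps |V(G)|, eps = 1/(6d) *)
  (forall H, is_graph H -> mindeg_ge H delta ->
     exists U, dominating H d U /\ (6 * d * #|` U| <= #|` verts H|)%N) ->
  forall G, is_graph G -> G != fset0 -> mindeg_ge G delta ->
  exists2 v0, v0 \in verts G & (rank M G <= rank M (del_vertex G v0) + d)%N.
Proof.
move=> hF _ _ dim thr d0 delta0 tdelta hr0 hdom G gG G0 mG.
case: (boolP [exists v : verts G, rank M G <= rank M (del_vertex G (val v)) + d]).
  by case/existsP => v h; exists (val v) => //; apply: fsvalP.
move/existsPn => hall.
have hw : forall w, w \in verts G -> rank M (del_vertex G w) + d < rank M G.
  by move=> w wV; have := hall [` wV]; rewrite /= -ltnNge.
exfalso.
have [v0 v0V] : exists v, v \in verts G.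
  by case/fset0Pn: G0 => p pG; exists p.1; apply: verts1.
have nG : delta < #|` verts G|.
  have d0' : 0 < deg G v0 by have := mG _ v0V; glia.
  have := deg_lt gG d0'; have := mG _ v0V; move: (deg G v0) => a; glia.
have [U [[UV dom] hU]] := hdom G gG mG.
set W := verts G `\` U.
have WV : W `<=` verts G by apply: fsubsetDl.
have cardW : (#|` W| = #|` verts G| - #|` U|)%N := cardfsDS UV.
have inW w : (w \in W) = (w \notin U) && (w \in verts G) by rewrite in_fsetD.
have wdom : forall w, w \in W -> d <= #|` nbrs G w `&` U|.
  by move=> w; rewrite inW => /andP[wU wV]; apply: dom.
set P := fun w => [fset x in take d (nbrs G w `&` U)].
set Fw := fun w => [fset mk_edge x w | x in P w].
set F := [fset p in G | has (fun w => p \in Fw w) W].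
have PP : forall w x, x \in P w -> mk_edge x w \in G /\ x \in U.
  move=> w x; rewrite /P inE => /mem_take; rewrite in_fsetI => /andP[].
  by rewrite /nbrs inE => /andP[_ ->].
have cP : forall w, w \in W -> #|` P w| = d.
  move=> w wW; rewrite /P card_fseq undup_id ?take_uniq ?fset_uniq // size_takel //.
  exact: wdom.
have FG : F `<=` G by apply/fsubsetP => p; rewrite inE => /andP[].
have FP : forall p, p \in F -> exists w, exists x, [/\ w \in W, x \in P w & p = mk_edge x w].
  move=> p; rewrite inE => /andP[_ /hasP [w wW /imfsetP [x /= xP ->]]].
  by exists w, x.
have WU : forall x, x \in U -> x \notin W by move=> x xU; rewrite inW xU.
have incsF : forall w, w \in W -> incs F w = Fw w.
  move=> w wW; apply/fsetP => p; rewrite /incs inE; apply/idP/idP.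
    move=> /andP[/FP [w' [x [w'W xP ->]]] inc].
    case: (inc_mk2 inc) => [e|e]; last by subst w'; apply/imfsetP; exists x.
    by have [_ xU] := PP _ _ xP; move: (WU _ xU); rewrite -e wW.
  move=> pF; have := pF; move/imfsetP => [x /= xP pE].
  rewrite pE; apply/andP; split; last exact: inc_mk.
  have [pG _] := PP _ _ xP.
  change (mk_edge x w \in F); rewrite /F inE; apply/andP; split; first exact: pG.
  by apply/hasP; exists w => //; rewrite -pE.
have degF : forall w, w \in W -> deg F w = d.
  move=> w wW; rewrite -(cP _ wW); change (#|` incs F w| = #|` P w|).
  rewrite incsF //; apply/eqP/card_in_imfsetP => x y _ _; apply: mk_edge_inj1.
have FW1 : forall p, p \in F -> (p.1 \in W) + (p.2 \in W) <= 1.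
  move=> p /FP [w [x [wW xP ->]]]; have [_ xU] := PP _ _ xP; have := WU _ xU.
  by case: (mk_ends x w) => [[-> ->]|[-> ->]] /negbTE ->; case: (w \in W).
clearbody F.
have iF : M G F.
  apply: (indep_lowdeg hF dim gG FG) => p pF.
  have [w [x [wW xP pE]]] := FP p pF.
  by exists w; rewrite ?pE ?inc_mk // degF.
have [B [iB FB BG cB]] := rkI_extend (hmat hF gG) iF FG.
have cB' : #|` B| = rank M G := cB.
have lowB : forall w, w \in W -> d.+1 <= #|` [fset p in B | incident w p]|.
  move=> w wW; have wV : w \in verts G by apply: (fsubsetP WV).
  set B' := [fset p in B | ~~ incident w p].
  have delG : del_vertex G w `<=` G by apply/fsubsetP => p; rewrite inE => /andP[].
  have B'del : B' `<=` del_vertex G w.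
    by apply/fsubsetP => p; rewrite !inE => /andP[pB ->]; rewrite (fsubsetP BG p pB).
  have B'B : B' `<=` B by apply/fsubsetP => p; rewrite inE => /andP[].
  have iB' : M (del_vertex G w) B'.
    apply: (indH hF gG delG B'del); case: (hmat hF gG) => _ _ hh _; exact: (hh _ _ iB B'B).
  have h1 := rank_ge iB' B'del.
  have h2 := hw w wV.
  have sp : (#|` B| = #|` [fset p in B | incident w p]| + #|` B'|)%N.
    rewrite /B' !card_sep card_fset_sum1 -big_split; apply: eq_bigr => p _.
    by case: (incident w p).
  move: h1 h2 sp cB'.
  move: (#|` B|) (#|` [fset p in B | incident w p]|) (#|` B'|) (rank M G) (rank M (del_vertex G w)) => a b c r r'.
  glia.
have S1 : #|` W| * d.+1 <= \sum_(p <- B) \sum_(w <- W) incident w p.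
  rewrite -double_count -sum_const_fset big_seq [X in _ <= X]big_seq.
  by apply: leq_sum => w wW; apply: lowB.
have S2 : \sum_(p <- B) \sum_(w <- W) incident w p + \sum_(p <- B) (p \in F) <= #|` B| * 2.
  rewrite -big_split /= card_fset_sum1 big_distrl /= big_seq [X in _ <= X]big_seq.
  apply: leq_sum => p pB; have := cnt_le W p.
  case: (boolP (p \in F)) => pF.
    by have := FW1 p pF; move: (\sum_(w <- W) incident w p) => a /=; glia.
  by case: (p.1 \in W); case: (p.2 \in W); move: (\sum_(w <- W) incident w p) => a /=; glia.
have S3 : (\sum_(p <- B) (p \in F) = #|` F|)%N.
  rewrite -card_sep; congr #|` _|; apply/fsetP => p; rewrite inE.
  by apply/andP/idP => [[]//|pF]; split=> //; apply: (fsubsetP FB).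
have S4 : #|` W| * d <= #|` F|.
  rewrite -sum_const_fset.
  have -> : \sum_(w <- W) d = \sum_(w <- W) #|` [fset p in F | incident w p]|.
    by rewrite big_seq [RHS]big_seq; apply: eq_bigr => w wW; rewrite -(degF w wW).
  rewrite double_count card_fset_sum1 big_seq [X in _ <= X]big_seq.
  apply: leq_sum => p pF; exact: leq_trans (cnt_le W p) (FW1 p pF).
have [[C [circ mk] cardC] _] := thr.
have [[c cV degc] _] := mk.
have tn : t <= #|` verts G| by glia.
have rK := Kn_bound hF circ degc cardC tn.
have rG := rank_le_Kn hF gG.
have r0 : 6 * rank M (Kn t) <= delta + 6 * (d * t).
  by move: hr0; move: (rank M (Kn t)) => rt; glia.
have uV : #|` U| <= #|` verts G| by apply: fsubset_leq_card.
rewrite S3 in S2.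
move: S1 S2 S4 cB' rG rK r0 hU cardW uV nG tdelta d0 tn.
move: (\sum_(p <- B) \sum_(w <- W) incident w p) (#|` F|) (#|` B|) (rank M G)
  (rank M (Kn #|` verts G|)) (rank M (Kn t)) (#|` U|) (#|` W|) (#|` verts G|) => S f b r rn rt u w n.
move=> h1 h2 h3 h4 h5 h6 h7 h8 h9 h10 h11 h12 h13 h14.
have e1 : (d * (n - t) = d * n - d * t)%N by rewrite mulnBr.
have e2 : (w * d = d * n - d * u)%N by rewrite h9 mulnBl mulnC [u * d]mulnC.
have e3 : (w * d.+1 = w * d + w)%N by rewrite mulnS addnC.
have e4 : u <= d * u by rewrite leq_pmull.
have e5 : d * t <= d * n by rewrite leq_mul2l h14 orbT.
have e6 : d * u <= d * n by rewrite leq_mul2l h10 orbT.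
rewrite e3 e2 in h1; rewrite e2 in h3; rewrite e1 in h6; rewrite -mulnA in h8.
move: h1 h3 h6 h7 h8 e4 e5 e6; move: (d * u) (d * n) (d * t) => X Y Z; glia.
Qed.
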